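(* Let $b\ge2$, $d\ge1$, $\Lambda_b=\{0,1,\dots,b-1\}^d$, and let $T$ be a supercritical Galton–Watson tree with alphabet $\Lambda_b$ and binomial offspring distribution with parameter $p$. For $k\ge2$ let $\mathscr{D}_{b,k}=\{X\subseteq(\Lambda_b)^k:\exists a\in(\Lambda_b)^{k-2},\ a(\Lambda_b)^2\subseteq X\}$ and $g_{\mathscr{D}_{b,k}}(s)=\mathbb{P}(T_k^{(s)}\notin\mathscr{D}_{b,k})$. Then for every $s\in(0,1)$, $g_{\mathscr{D}_{b,k}}(s)\to\mathbb{P}(\text{extinction})$ as $k\to\infty$.
   Context: The Galton–Watson tree with offspring distribution $W$, where $\mathbb{P}(W=B)=p^{|B|}(1-p)^{|\Lambda_b\setminus B|}$ for $B\subseteq\Lambda_b$, is $T_0=\{\emptyset\}$, $T_n=\{aj:a\in T_{n-1},j\in W_a\}$ with independent copies $W_a$; supercritical means $pb^d>1$; extinction means $T_n=\emptyset$ for some $n$. $a(\Lambda_b)^2=\{aj:j\in(\Lambda_b)^2\}$. $T_k^{(s)}=T_k\cap Y$ with $Y\subseteq(\Lambda_b)^k$ independent of $T$, $\mathbb{P}(Y=B)=(1-s)^{|B|}s^{|(\Lambda_b)^k\setminus B|}$. *)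

(* Defs.v *)
From HB Require Import structures.
From mathcomp Require Import all_boot all_order all_algebra.
From mathcomp Require Import all_classical all_reals all_analysis.
Set Implicit Arguments. Unset Strict Implicit. Unset Printing Implicit Defensive.
Import Order.TTheory GRing.Theory Num.Theory.
Import numFieldNormedType.Exports.
Local Open Scope ring_scope.

Definition Lam (b d : nat) : finType := {ffun 'I_d -> 'I_b}.

Definition Node (b d n : nat) : finType := {i : 'I_n & i.-tuple (Lam b d)}.

(* A realisation of the offspring sets W_a for all words a with |a| < n *)
Definition Conf (b d n : nat) : finType := {ffun Node b d n -> {set Lam b d}}.

(* The offspring set W_a of a word a (given as a sequence); empty if |a| >= n *)
Definition Woff b d n (F : Conf b d n) (a : seq (Lam b d)) : {set Lam b d} :=
  [set j | [exists v : Node b d n, (val (tagged v) == a) && (j \in F v)]].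

Fixpoint Tgen b d n (F : Conf b d n) (m : nat) : seq (seq (Lam b d)) :=
  if m is m'.+1 then
    [seq rcons a j | a <- Tgen F m', j <- enum (Woff F a)]
  else [:: [::]].

Definition binw {R : realType} (T : finType) (p : R) (B : {set T}) : R :=
  p ^+ #|B| * (1 - p) ^+ #|~: B|.

Definition confw {R : realType} b d n (p : R) (F : Conf b d n) : R :=
  \prod_(v : Node b d n) binw p (F v).

Definition Pempty {R : realType} b d (p : R) (n : nat) : R :=
  \sum_(F : Conf b d n | Tgen F n == [::]) confw p F.

(* P(extinction) = P(U_n {T_n = empty}) = lim_n P(T_n = empty) (increasing events) *)
Definition Pext {R : realType} b d (p : R) : R := limn (Pempty b d p).

(* The event T_k^{(s)} = T_k cap Y belongs to D_{b,k}:
   some a in (Lambda_b)^{k-2} with a (Lambda_b)^2 subset of T_k cap Y *)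
Definition inD b d k (F : Conf b d k) (Y : {set k.-tuple (Lam b d)}) : bool :=
  [exists a : (k.-2).-tuple (Lam b d), [forall x : Lam b d, forall y : Lam b d,
     let w := (val a ++ [:: x; y]) in
     (w \in Tgen F k) && (w \in [seq val t | t in Y])]].

(* g_{D_{b,k}}(s) = P(T_k^{(s)} notin D_{b,k}), Y independent of T with
   P(Y = B) = (1-s)^|B| s^|complement B| *)
Definition gD {R : realType} b d (p s : R) (k : nat) : R :=
  \sum_(F : Conf b d k)
    \sum_(Y : {set k.-tuple (Lam b d)} | ~~ inD F Y)
      confw p F * binw (1 - s) Y.

(* Main.v *)
Require Import Defs.
From HB Require Import structures.
From mathcomp Require Import all_boot all_order all_algebra.
From mathcomp Require Import all_classical all_reals all_analysis.
Import Order.TTheory GRing.Theory Num.Theory.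
Import numFieldNormedType.Exports.
Local Open Scope ring_scope.
Local Open Scope classical_set_scope.
From mathcomp Require Import ring lra.
Set Implicit Arguments. Unset Strict Implicit.
Local Close Scope classical_set_scope.
Definition Ew {R : realType} {I J : finType} (w : J -> R) (X : {ffun I -> J} -> R) : R :=
  \sum_(f : {ffun I -> J}) (\prod_i w (f i)) * X f.

Definition mrg {I J : finType} (S : {set I}) (f g : {ffun I -> J}) : {ffun I -> J} :=
  [ffun i => if i \in S then g i else f i].

Definition dep {I J : finType} {T : Type} (S : {set I}) (G : {ffun I -> J} -> T) :=
  forall f g : {ffun I -> J}, (forall i, i \in S -> f i = g i) -> G f = G g.

Lemma eq_Ew (R : realType) (I J : finType) (w : J -> R) X Y :
  (forall f, X f = Y f) -> Ew (I:=I) w X = Ew w Y.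
Proof. by move=> h; apply: eq_bigr => f _; rewrite h. Qed.

Lemma Ew1 (R : realType) (I J : finType) (w : J -> R) :
  \sum_j w j = 1 -> \sum_(f : {ffun I -> J}) \prod_i w (f i) = 1.
Proof.
move=> h; rewrite -(bigA_distr_bigA (fun (i : I) (j : J) => w j)) /=.
by rewrite big1 // => i _; rewrite h.
Qed.

Lemma Ew_cst (R : realType) (I J : finType) (w : J -> R) c :
  \sum_j w j = 1 -> Ew (I:=I) w (fun=> c) = c.
Proof. by move=> h; rewrite /Ew -mulr_suml Ew1 // mul1r. Qed.

Lemma Ew_affine (R : realType) (I J : finType) (w : J -> R) X a c :
  \sum_j w j = 1 -> Ew (I:=I) w (fun f => a - X f * c) = a - Ew w X * c.
Proof.
move=> h; rewrite /Ew.
under eq_bigr do rewrite mulrBr mulrA.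
by rewrite sumrB -mulr_suml Ew1 // mul1r -mulr_suml.
Qed.

Lemma Ew_mulr (R : realType) (I J : finType) (w : J -> R) X c :
  Ew (I:=I) w (fun f => X f * c) = Ew w X * c.
Proof. by rewrite /Ew mulr_suml; apply: eq_bigr => f _; rewrite mulrA. Qed.

Lemma mrgK (I J : finType) (S : {set I}) (f g : {ffun I -> J}) :
  mrg S (mrg S f g) (mrg S g f) = f.
Proof. by apply/ffunP => i; rewrite !ffunE; case: (i \in S). Qed.

Lemma Ew_mrg (R : realType) (I J : finType) (w : J -> R) (S : {set I}) X :
  \sum_j w j = 1 ->
  Ew w X = Ew w (fun f => Ew (I:=I) w (fun g => X (mrg S f g))).
Proof.
move=> h1; rewrite /Ew.
transitivity (\sum_(f : {ffun I -> J}) \sum_(g : {ffun I -> J})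
   ((\prod_i w (f i)) * X f) * (\prod_i w (g i))).
  by apply: eq_bigr => f _; rewrite -mulr_sumr Ew1 // mulr1.
rewrite pair_bigA /=.
pose sg := fun p : {ffun I -> J} * {ffun I -> J} => (mrg S p.1 p.2, mrg S p.2 p.1).
have sgK : involutive sg by case=> f g; rewrite /sg /= !mrgK.
rewrite (reindex_inj (inv_inj sgK)) /=.
rewrite -(pair_bigA _ (fun f g => (\prod_i w (mrg S f g i) * X (mrg S f g))
    * \prod_i w (mrg S g f i))) /=.
apply: eq_bigr => f _; rewrite mulr_sumr; apply: eq_bigr => g _.
rewrite mulrAC mulrA; congr (_ * _).
rewrite -!big_split /=; apply: eq_bigr => i _; rewrite !ffunE.
by case: (i \in S) => //; rewrite mulrC.
Qed.

Lemma Ew_indep2 (R : realType) (I J : finType) (w : J -> R) (S : {set I}) G H :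
  \sum_j w j = 1 -> dep S G -> dep (~: S) H ->
  Ew (I:=I) w (fun f => G f * H f) = Ew w G * Ew w H.
Proof.
move=> h1 dG dH; rewrite (@Ew_mrg _ _ _ w S) //.
transitivity (Ew w (fun f => Ew (I:=I) w G * H f)).
  apply: eq_Ew => f; rewrite -Ew_mulr; apply: eq_Ew => g.
  congr (_ * _).
    by apply: dG => i iS; rewrite ffunE iS.
  by apply: dH => i; rewrite inE ffunE => /negbTE ->.
by rewrite mulrC -Ew_mulr; apply: eq_Ew => f; rewrite mulrC.
Qed.

Lemma Ew_indep (R : realType) (I J : finType) (w : J -> R) (A : finType)
    (S : A -> {set I}) (G : A -> {ffun I -> J} -> R) :
  \sum_j w j = 1 -> (forall a, dep (S a) (G a)) ->
  (forall a a' i, i \in S a -> i \in S a' -> a = a') ->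
  Ew w (fun f => \prod_a G a f) = \prod_a Ew w (G a).
Proof.
move=> h1 dG dis.
suff H : forall r : seq A, uniq r ->
    Ew w (fun f => \prod_(a <- r) G a f) = \prod_(a <- r) Ew w (G a).
  exact: (H (index_enum A) (index_enum_uniq A)).
elim=> [|a r IH] /=.
  by move=> _; rewrite big_nil (@eq_Ew _ _ _ w _ (fun=> 1)) ?Ew_cst // => f; rewrite big_nil.
case/andP=> anr ur; rewrite big_cons -IH //.
rewrite -(@Ew_indep2 _ _ _ w (S a)) //.
  by apply: eq_Ew => f; rewrite big_cons.
move=> f g e; apply: eq_big_seq => a' a'r; apply: dG => i ia'.
apply: e; rewrite inE; apply/negP => ia.
by move: anr; rewrite (dis _ _ _ ia ia') a'r.
Qed.

Lemma Ew_coord (R : realType) (I J : finType) (w : J -> R) (i0 : I) (phi : J -> R) :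
  \sum_j w j = 1 -> Ew w (fun f : {ffun I -> J} => phi (f i0)) = \sum_j w j * phi j.
Proof.
move=> h1; rewrite /Ew.
transitivity (\sum_(f : {ffun I -> J})
    \prod_i (w (f i) * (if i == i0 then phi (f i) else 1))).
  apply: eq_bigr => f _; rewrite big_split /=; congr (_ * _).
  rewrite (bigD1 i0) //= eqxx.
  by rewrite big1 ?mulr1 // => i /negbTE ->.
rewrite -(bigA_distr_bigA (fun i j => w j * (if i == i0 then phi j else 1))) /=.
rewrite (bigD1 i0) //= [X in _ * X]big1 ?mulr1.
  by apply: eq_bigr => j _; rewrite eqxx.
by move=> i /negbTE hi; under eq_bigr do rewrite hi mulr1.
Qed.

Lemma Ew_prod_coord (R : realType) (I J : finType) (w : J -> R) (A : finType)
   (iota : A -> I) (phi : A -> J -> R) :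
  \sum_j w j = 1 -> injective iota ->
  Ew w (fun f : {ffun I -> J} => \prod_a phi a (f (iota a))) =
  \prod_a \sum_j w j * phi a j.
Proof.
move=> h1 inj.
rewrite (@Ew_indep _ _ _ w _ (fun a => [set iota a])) //.
- by apply: eq_bigr => a _; apply: Ew_coord.
- by move=> a f g e; rewrite e // set11.
- by move=> a a' i; rewrite !inE => /eqP -> /eqP /inj.
Qed.

Lemma sum_set_ffun (R : realType) (T : finType) (F : {set T} -> R) :
  \sum_(B : {set T}) F B = \sum_(f : {ffun T -> bool}) F [set x | f x].
Proof.
rewrite (reindex (fun f : {ffun T -> bool} => [set x | f x])) //.
exists (fun B : {set T} => [ffun x => x \in B]) => [f _ | B _].
  by apply/ffunP => x; rewrite ffunE inE.
by apply/setP => x; rewrite !inE ffunE.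
Qed.

Lemma sum_set_prod (R : realType) (T : finType) (phi : T -> bool -> R) :
  \sum_(B : {set T}) \prod_x phi x (x \in B) = \prod_x (phi x true + phi x false).
Proof.
rewrite sum_set_ffun.
transitivity (\prod_x \sum_b phi x b); last by apply: eq_bigr => x _; rewrite big_bool.
rewrite (bigA_distr_bigA phi); apply: eq_bigr => f _.
by apply: eq_bigr => x _; rewrite inE.
Qed.

Lemma binw_prod (R : realType) (T : finType) (p : R) (B : {set T}) :
  binw p B = \prod_x (if x \in B then p else 1 - p).
Proof.
rewrite /binw (bigID (fun x => x \in B)) /=.
congr (_ * _).
  rewrite -prodr_const; apply: eq_big => x //; by move=> ->.
rewrite -prodr_const; apply: eq_big => x; first by rewrite inE.
by rewrite inE => /negbTE ->.
Qed.

Definition wd {b d n : nat} (v : Node b d n) : seq (Lam b d) := val (tagged v).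

Lemma size_wd b d n (v : Node b d n) : size (wd v) = tag v.
Proof. by rewrite /wd size_tuple. Qed.

Definition nodeT {b d n m : nat} (hm : (m < n)%N) (t : m.-tuple (Lam b d)) : Node b d n :=
  existT (fun i : 'I_n => i.-tuple (Lam b d)) (Ordinal hm) t.

Lemma wd_nodeT b d n m (hm : (m < n)%N) (t : m.-tuple (Lam b d)) :
  wd (nodeT hm t) = t.
Proof. by []. Qed.

Lemma nodeT_uniq b d n m (hm : (m < n)%N) (t : m.-tuple (Lam b d)) (v : Node b d n) :
  wd v = t -> v = nodeT hm t.
Proof.
case: v => [[i hi] u]; rewrite /wd /= => e.
have ei : i = m.
  by have := size_tuple u; rewrite e size_tuple.
subst i; rewrite /nodeT (bool_irrelevance hi hm); congr existT.
exact: val_inj.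
Qed.

Lemma Woff_nodeT b d n m (hm : (m < n)%N) (t : m.-tuple (Lam b d)) (F : Conf b d n) :
  Woff F t = F (nodeT hm t).
Proof.
apply/setP => j; rewrite inE; apply/existsP/idP => [[v /andP[/eqP e hj]]|hj].
  by rewrite -(nodeT_uniq hm e).
by exists (nodeT hm t); rewrite hj eqxx.
Qed.

Lemma Woff_dep b d n (F G : Conf b d n) a :
  (forall v, wd v = a -> F v = G v) -> Woff F a = Woff G a.
Proof.
move=> H; apply/setP => j; rewrite !inE.
apply/existsP/existsP => -[v /andP[/eqP e hj]]; exists v; rewrite e eqxx /=.
  by rewrite -(H v e).
by rewrite (H v e).
Qed.

Fixpoint inTa {b d n : nat} (F : Conf b d n) (acc w : seq (Lam b d)) : bool :=
  if w is j :: w' then (j \in Woff F acc) && inTa F (rcons acc j) w' else true.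

Definition inT {b d n : nat} (F : Conf b d n) (w : seq (Lam b d)) := inTa F [::] w.

Lemma inTa_rcons b d n (F : Conf b d n) acc w j :
  inTa F acc (rcons w j) = inTa F acc w && (j \in Woff F (acc ++ w)).
Proof.
elim: w acc => [|x w IH] acc /=; first by rewrite cats0 andbT.
by rewrite IH cat_rcons andbA.
Qed.

Lemma inT_rcons b d n (F : Conf b d n) w j :
  inT F (rcons w j) = inT F w && (j \in Woff F w).
Proof. by rewrite /inT inTa_rcons. Qed.

Lemma inT_nil b d n (F : Conf b d n) : inT F [::] = true.
Proof. by []. Qed.

Lemma inT_dep b d n (F G : Conf b d n) w :
  (forall v, (size (wd v) < size w)%N -> F v = G v) -> inT F w = inT G w.
Proof.
elim/last_ind: w => [|w j IH] H //.
rewrite !inT_rcons IH; last first.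
  by move=> v hv; apply: H; rewrite size_rcons ltnS ltnW.
rewrite (@Woff_dep _ _ _ F G w) // => v e; apply: H.
by rewrite e size_rcons.
Qed.

Lemma memT b d n (F : Conf b d n) m w :
  (w \in Tgen F m) = (size w == m) && inT F w.
Proof.
elim: m w => [|m IH] w /=; first by case: w.
apply/allpairsPdep/andP => [[a [j [ha hj ->]]]|[]].
  move: ha; rewrite IH size_rcons inT_rcons => /andP[/eqP -> ->].
  by rewrite mem_enum in hj; rewrite hj.
case/lastP: w => [|a j] //; rewrite size_rcons inT_rcons eqSS => sz /andP[ia ja].
by exists a, j; split; rewrite ?IH ?sz ?mem_enum.
Qed.

Lemma Tgen_nil b d n (F : Conf b d n) m :
  (Tgen F m == [::]) = [forall t : m.-tuple (Lam b d), ~~ inT F t].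
Proof.
apply/eqP/forallP => [e t | h].
  apply/negP => it; have : val t \in Tgen F m by rewrite memT size_tuple eqxx.
  by rewrite e.
case e: (Tgen F m) => [|w s] //; have : w \in Tgen F m by rewrite e mem_head.
by rewrite memT => /andP[sz it]; have := h (Tuple sz); rewrite /= it.
Qed.

Lemma prod_rcons (R : realType) (T : finType) m (G : m.+1.-tuple T -> R) :
  \prod_(t : m.+1.-tuple T) G t =
  \prod_(t : m.-tuple T) \prod_(j : T) G [tuple of rcons t j].
Proof.
rewrite pair_bigA /=.
have bij : bijective (fun p : m.-tuple T * T => [tuple of rcons p.1 p.2]).
  apply: inj_card_bij.
    move=> [t j] [t' j'] /(congr1 val) /= /rcons_inj [/val_inj -> ->] //.
  by rewrite card_prod !card_tuple expnS mulnC.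
by rewrite (reindex _ (onW_bij _ bij)).
Qed.

Lemma binw_sum (R : realType) (T : finType) (p : R) :
  \sum_(B : {set T}) binw p B = 1.
Proof.
under eq_bigr do rewrite binw_prod.
rewrite (sum_set_prod (fun _ b => if b then p else 1 - p)) /=.
by rewrite big1 // => x _; rewrite addrCA subrr addr0.
Qed.

Lemma binw_pgf (R : realType) (T : finType) (p y : R) :
  \sum_(B : {set T}) binw p B * \prod_j (if j \in B then y else 1) =
  (p * y + (1 - p)) ^+ #|T|.
Proof.
under eq_bigr do rewrite binw_prod -big_split /=.
rewrite (sum_set_prod (fun _ b => (if b then p else 1 - p) * (if b then y else 1))) /=.
by rewrite mulr1 prodr_const.
Qed.

Lemma binw_all (R : realType) (T : finType) (p : R) k : (0 < k)%N ->
  \sum_(B : {set T}) binw p B * \prod_x ((x \in B)%:R ^+ k) = p ^+ #|T|.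
Proof.
move=> k0; under eq_bigr do rewrite binw_prod -big_split /=.
rewrite (sum_set_prod (fun _ b => (if b then p else 1 - p) * (b%:R ^+ k))) /=.
by rewrite expr1n mulr1 expr0n (negbTE (lt0n_neq0 k0)) mulr0 addr0 prodr_const.
Qed.

Definition fpgf {R : realType} (p : R) (N : nat) (y : R) := (p * y + (1 - p)) ^+ N.

Definition Qn {R : realType} (b d n : nat) (p : R) (m : nat) (y : R) : R :=
  Ew (binw p) (fun F : {ffun Node b d n -> {set Lam b d}} =>
    \prod_(t : m.-tuple (Lam b d)) (if inT (F : Conf b d n) t then y else 1)).

Lemma Qn0 (R : realType) b d n (p y : R) : Qn b d n p 0 y = y.
Proof.
rewrite /Qn (@eq_Ew _ _ _ _ _ (fun=> y)) ?Ew_cst ?binw_sum // => F.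
rewrite (eq_bigr (fun=> y)); last by move=> t _; rewrite tuple0.
by rewrite prodr_const card_tuple expn0 expr1.
Qed.

Lemma Qn_step (R : realType) b d n (p : R) m y : (m < n)%N ->
  Qn b d n p m.+1 y = Qn b d n p m (fpgf p #|Lam b d| y).
Proof.
move=> hm; rewrite /Qn.
have h1 := binw_sum (Lam b d) p.
pose S := [set v : Node b d n | tag v == m :> nat].
transitivity (Ew (binw p) (fun F : {ffun Node b d n -> {set Lam b d}} =>
   \prod_(t : m.-tuple (Lam b d)) (if inT (F : Conf b d n) t then
       \prod_j (if j \in F (nodeT hm t) then y else 1) else 1))).
  apply: eq_Ew => F; rewrite prod_rcons; apply: eq_bigr => t _.
  case: (boolP (inT (F : Conf b d n) t)) => it.
    by apply: eq_bigr => j _; rewrite /= inT_rcons it /= (Woff_nodeT hm).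
  by apply: big1 => j _; rewrite /= inT_rcons (negbTE it).
rewrite (@Ew_mrg _ _ _ _ S) //; apply: eq_Ew => F.
transitivity (Ew (binw p) (fun G : {ffun Node b d n -> {set Lam b d}} =>
   \prod_(t : m.-tuple (Lam b d)) (fun t (B : {set Lam b d}) => if inT (F : Conf b d n) t then
       \prod_j (if j \in B then y else 1) else 1) t (G (nodeT hm t)))).
  apply: eq_Ew => G; apply: eq_bigr => t _ /=.
  rewrite ffunE inE /= eqxx; congr (if _ then _ else _).
  apply: inT_dep => v; rewrite size_wd size_tuple ffunE inE => hv.
  by rewrite ltn_eqF.
rewrite (@Ew_prod_coord _ _ _ _ _ (fun t => nodeT hm t) (fun t (B : {set Lam b d}) => if inT (F : Conf b d n) t then
       \prod_j (if j \in B then y else 1) else 1)) //; last first.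
  by move=> t t' /(congr1 wd); rewrite !wd_nodeT => /val_inj.
apply: eq_bigr => t _; case: (inT _ t); first by rewrite binw_pgf.
by under eq_bigr do rewrite mulr1.
Qed.

Lemma Qn_iter (R : realType) b d n (p : R) m y : (m <= n)%N ->
  Qn b d n p m y = iter m (fpgf p #|Lam b d|) y.
Proof.
elim: m y => [|m IH] y hm; first by rewrite Qn0.
by rewrite Qn_step // IH 1?ltnW // iterSr.
Qed.

Lemma prod01 (R : realType) (T : finType) (P : pred T) :
  \prod_t (if P t then (0:R) else 1) = if [forall t, ~~ P t] then 1 else 0.
Proof.
case: (boolP [forall t, ~~ P t]) => [/forallP h|].
  by apply: big1 => t _; rewrite (negbTE (h t)).
rewrite negb_forall => /existsP [t /negPn Pt].
by rewrite (bigD1 t) //= Pt mul0r.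
Qed.

Lemma Pempty_Q (R : realType) b d (p : R) n : Pempty b d p n = Qn b d n p n 0.
Proof.
rewrite /Pempty /Qn /Ew big_mkcond /=; apply: eq_bigr => F _.
rewrite prod01 -Tgen_nil /confw.
by case: (Tgen F n == [::]); rewrite ?mulr1 ?mulr0.
Qed.

Lemma tupP b d m (a : m.-tuple (Lam b d)) (x y : Lam b d) :
  size (val a ++ [:: x; y]) == m.+2.
Proof. by rewrite size_cat size_tuple addn2. Qed.

Definition tup {b d m} (a : m.-tuple (Lam b d)) x y := Tuple (tupP a x y).

Lemma inD_char b d m (F : Conf b d m.+2) (Y : {set m.+2.-tuple (Lam b d)}) :
  inD F Y = [exists a : m.-tuple (Lam b d), [forall x, forall y,
     inT F (val a ++ [:: x; y]) && (tup a x y \in Y)]].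
Proof.
rewrite /inD; apply: eq_existsb => a; apply: eq_forallb => x; apply: eq_forallb => y.
rewrite memT size_cat size_tuple addn2 eqxx /=; congr (_ && _).
by rewrite (_ : val a ++ [:: x; y] = val (tup a x y)) // fintype.mem_image //; exact: val_inj.
Qed.

Lemma andR (R : realType) (a b : bool) : ((a && b)%:R : R) = a%:R * b%:R.
Proof. by case: a; case: b; rewrite /= ?mulr1 ?mulr0. Qed.

Lemma forallR (R : realType) (T : finType) (P : pred T) :
  (([forall a, P a])%:R : R) = \prod_a (P a)%:R.
Proof.
case: (boolP [forall a, P a]) => [/forallP h|].
  by rewrite big1 // => a _; rewrite h.
rewrite negb_forall => /existsP [a /negbTE Pa].
by rewrite (bigD1 a) //= Pa mul0r.
Qed.

Lemma nexistsR (R : realType) (T : finType) (P : pred T) :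
  ((~~ [exists a, P a])%:R : R) = \prod_a (1 - (P a)%:R).
Proof.
rewrite negb_exists forallR; apply: eq_bigr => a _.
by case: (P a); rewrite ?subrr ?subr0.
Qed.

Lemma Ysum (R : realType) b d m (F : Conf b d m.+2) (s : R) :
  \sum_(Y : {set m.+2.-tuple (Lam b d)}) binw (1 - s) Y * (~~ inD F Y)%:R =
  \prod_(a : m.-tuple (Lam b d))
     (1 - ([forall x, forall y, inT F (val a ++ [:: x; y])])%:R *
          (1 - s) ^+ (#|Lam b d| * #|Lam b d|)).
Proof.
pose wY := fun bb : bool => if bb then 1 - s else s.
have h1 : \sum_bb wY bb = 1 by rewrite big_bool /wY /= subrK.
rewrite sum_set_ffun.
transitivity (Ew wY (fun f : {ffun m.+2.-tuple (Lam b d) -> bool} =>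
   \prod_(a : m.-tuple (Lam b d))
     (1 - (\prod_(xy : Lam b d * Lam b d) (f (tup a xy.1 xy.2))%:R) *
          ([forall x, forall y, inT F (val a ++ [:: x; y])])%:R))).
  apply: eq_bigr => f _; congr (_ * _).
    rewrite binw_prod; apply: eq_bigr => t _; rewrite inE /wY.
    by case: (f t) => //; rewrite opprB addrC subrK.
  rewrite inD_char nexistsR; apply: eq_bigr => a _.
  rewrite -(pair_bigA _ (fun x y => ((f (tup a x y))%:R : R))) /=.
  rewrite !forallR mulrC -big_split /=; congr (_ - _).
  apply: eq_bigr => x _; rewrite !forallR -big_split /=.
  by apply: eq_bigr => y _; rewrite andR inE.
rewrite (@Ew_indep _ _ _ wY _ (fun a => [set t : m.+2.-tuple (Lam b d) | take m t == val a])) //.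
- apply: eq_bigr => a _; rewrite Ew_affine // mulrC; congr (_ - _ * _).
  rewrite (@Ew_prod_coord _ _ _ _ _ (fun xy => tup a xy.1 xy.2) (fun _ (bb : bool) => (bb%:R : R))) //.
    rewrite (eq_bigr (fun=> 1 - s)); last by move=> xy _; rewrite big_bool /wY /= mulr1 mulr0 addr0.
    by rewrite prodr_const card_prod.
  move=> [x y] [x' y'] /(congr1 val) /= /eqP; rewrite eqseq_cat //.
  by case/andP=> _ /eqP [-> ->].
- move=> a f g e; congr (_ - _ * _); apply: eq_bigr => xy _; rewrite e // inE /=.
  by rewrite take_size_cat ?size_tuple.
- move=> a a' t; rewrite !inE => /eqP e /eqP e'.
  by apply: val_inj; rewrite -e -e'.
Qed.

Definition Ind {R : realType} {b d n m : nat} (G : Conf b d n) (a : m.-tuple (Lam b d)) : R :=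
  \prod_x \prod_y ((x \in Woff G a) && (y \in Woff G (rcons a x)))%:R.

Lemma EInd (R : realType) b d m (p : R) (a : m.-tuple (Lam b d)) : (0 < #|Lam b d|)%N ->
  Ew (binw p) (fun G : {ffun Node b d m.+2 -> {set Lam b d}} => Ind (R:=R) (G : Conf b d m.+2) a)
   = p ^+ #|Lam b d| * (p ^+ #|Lam b d|) ^+ #|Lam b d|.
Proof.
move=> N0; have h1 := binw_sum (Lam b d) p.
have hm : (m < m.+2)%N by [].
have hm1 : (m.+1 < m.+2)%N by [].
transitivity (Ew (binw p) (fun G : {ffun Node b d m.+2 -> {set Lam b d}} =>
   (fun G : {ffun Node b d m.+2 -> {set Lam b d}} =>
      \prod_x (((x \in G (nodeT hm a))%:R : R) ^+ #|Lam b d|)) G *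
   (fun G : {ffun Node b d m.+2 -> {set Lam b d}} =>
      \prod_x \prod_y (((y \in G (nodeT hm1 [tuple of rcons a x]))%:R : R))) G)).
  apply: eq_Ew => G /=; rewrite /Ind -big_split /=; apply: eq_bigr => x _.
  rewrite -prodr_const -big_split /=; apply: eq_bigr => y _.
  by rewrite andR (Woff_nodeT hm) (Woff_nodeT hm1 [tuple of rcons a x]).
rewrite (@Ew_indep2 _ _ _ _ [set nodeT hm a]) //.
- rewrite (@Ew_coord _ _ _ _ (nodeT hm a)
     (fun B : {set Lam b d} => \prod_x (((x \in B)%:R : R) ^+ #|Lam b d|))) //.
  rewrite binw_all //; congr (_ * _).
  rewrite (@Ew_prod_coord _ _ _ _ _ (fun x => nodeT hm1 [tuple of rcons a x])
     (fun _ (B : {set Lam b d}) => \prod_y (((y \in B)%:R : R)))) //.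
    rewrite (eq_bigr (fun=> p ^+ #|Lam b d|)) ?prodr_const // => x _.
    rewrite -(@binw_all _ _ p 1 (ltnSn 0)); by apply: eq_bigr => B _; congr (_ * _).
  move=> x x' /(congr1 wd); rewrite !wd_nodeT /= => /rcons_inj [] //.
- by move=> G G' e; rewrite e // set11.
- move=> G G' e; apply: eq_bigr => x _; apply: eq_bigr => y _; rewrite e // !inE.
  apply/negP => /eqP /(congr1 (fun v : Node b d m.+2 => size (wd v))).
  by rewrite !wd_nodeT /= size_rcons !size_tuple => /eqP; rewrite (gtn_eqF (ltnSn m)).
Qed.

Lemma gD_Q (R : realType) b d m (p s : R) (x0 : Lam b d) :
  gD b d p s m.+2 = Qn b d m.+2 p m
    (1 - p ^+ #|Lam b d| * (p ^+ #|Lam b d|) ^+ #|Lam b d| *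
         (1 - s) ^+ (#|Lam b d| * #|Lam b d|)).
Proof.
have N0 : (0 < #|Lam b d|)%N by apply/card_gt0P; exists x0.
set cY := (1 - s) ^+ (#|Lam b d| * #|Lam b d|).
have h1 := binw_sum (Lam b d) p.
have cat2 : forall (a : seq (Lam b d)) x y, a ++ [:: x; y] = rcons (rcons a x) y.
  by move=> a x y; rewrite -!cats1 -catA.
transitivity (Ew (binw p) (fun F : {ffun Node b d m.+2 -> {set Lam b d}} =>
   \prod_(a : m.-tuple (Lam b d)) (if inT (F : Conf b d m.+2) a
       then 1 - Ind (R:=R) (F : Conf b d m.+2) a * cY else 1))).
  rewrite /gD /Ew; apply: eq_bigr => F _.
  transitivity (confw p F * \sum_(Y : {set m.+2.-tuple (Lam b d)})
                  binw (1 - s) Y * (~~ inD F Y)%:R).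
    rewrite mulr_sumr big_mkcond; apply: eq_bigr => Y _.
    by case: (inD F Y) => /=; rewrite ?mulr0 ?mulr1.
  rewrite Ysum /confw; congr (_ * _); apply: eq_bigr => a _.
  case: (boolP (inT F a)) => it.
    congr (1 - _ * _); rewrite forallR /Ind; apply: eq_bigr => x _.
    rewrite forallR; apply: eq_bigr => y _.
    by rewrite cat2 !inT_rcons it.
  rewrite (_ : [forall x, forall y, _] = false) ?mul0r ?subr0 //.
  apply/negbTE/forallP => /(_ x0) /forallP /(_ x0).
  by rewrite cat2 !inT_rcons (negbTE it).
pose S := [set v : Node b d m.+2 | (m <= tag v)%N].
rewrite [LHS](@Ew_mrg _ _ _ _ S) //; rewrite /Qn; apply: eq_Ew => F.
transitivity (Ew (binw p) (fun G : {ffun Node b d m.+2 -> {set Lam b d}} =>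
   \prod_(a : m.-tuple (Lam b d)) (if inT (F : Conf b d m.+2) a
       then 1 - Ind (R:=R) (G : Conf b d m.+2) a * cY else 1))).
  apply: eq_Ew => G; apply: eq_bigr => a _.
  rewrite (@inT_dep _ _ _ (mrg S F G) F) => [|v]; last first.
    move=> hv; have hv' : (tag v < m)%N.
      by rewrite -size_wd; apply: (leq_trans hv); rewrite size_tuple.
    by rewrite ffunE inE leqNgt hv'.
  congr (if _ then 1 - _ * _ else _); rewrite /Ind; apply: eq_bigr => x _.
  apply: eq_bigr => y _.
  rewrite (@Woff_dep _ _ _ (mrg S F G) G a); last first.
    by move=> v e; rewrite ffunE inE -size_wd e size_tuple leqnn.
  rewrite (@Woff_dep _ _ _ (mrg S F G) G (rcons a x)) //.
  by move=> v e; rewrite ffunE inE -size_wd e size_rcons size_tuple leqnSn.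
rewrite (@Ew_indep _ _ _ _ _
   (fun a : m.-tuple (Lam b d) => [set v : Node b d m.+2 | take m (wd v) == val a])) //.
- apply: eq_bigr => a _; case: (inT _ a); last exact: Ew_cst.
  by rewrite Ew_affine // EInd.
- move=> a G G' e; congr (if _ then 1 - _ * _ else _); rewrite /Ind.
  apply: eq_bigr => x _; apply: eq_bigr => y _.
  rewrite (@Woff_dep _ _ _ G G' a); last first.
    by move=> v ev; apply: e; rewrite inE ev take_oversize // size_tuple.
  rewrite (@Woff_dep _ _ _ G G' (rcons a x)) //.
  by move=> v ev; apply: e; rewrite inE ev -cats1 take_size_cat ?size_tuple.
- move=> a a' v; rewrite !inE => /eqP e /eqP e'.
  by apply: val_inj; rewrite -e -e'.
Qed.


Lemma f_range (R : realType) (p : R) N x : 0 <= p -> p <= 1 -> 0 <= x -> x <= 1 ->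
  0 <= fpgf p N x /\ fpgf p N x <= 1.
Proof.
move=> p0 p1 x0 x1; rewrite /fpgf.
have u0 : 0 <= p * x + (1 - p) by nra.
have u1 : p * x + (1 - p) <= 1 by nra.
by split; [exact: exprn_ge0 | exact: exprn_ile1].
Qed.

Lemma f_mono (R : realType) (p : R) N x y : 0 <= p -> p <= 1 -> 0 <= x -> x <= y ->
  fpgf p N x <= fpgf p N y.
Proof.
move=> p0 p1 x0 xy; rewrite /fpgf; apply: lerXn2r; rewrite ?nnegrE; nra.
Qed.

Lemma iter_range (R : realType) (p : R) N n x : 0 <= p -> p <= 1 -> 0 <= x -> x <= 1 ->
  0 <= iter n (fpgf p N) x /\ iter n (fpgf p N) x <= 1.
Proof.
move=> p0 p1 x0 x1; elim: n => [|n [h0 h1]] //=; exact: f_range.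
Qed.

Lemma iter_mono (R : realType) (p : R) N n x y : 0 <= p -> p <= 1 -> 0 <= x -> x <= y ->
  y <= 1 -> iter n (fpgf p N) x <= iter n (fpgf p N) y.
Proof.
move=> p0 p1 x0 xy y1; elim: n => [|n IH] //=; apply: f_mono => //.
by case: (@iter_range _ p N n x p0 p1 x0 (le_trans xy y1)).
Qed.

Lemma S_strict (R : realType) (u v : R) N : (1 < N)%N -> 0 <= v -> v < u ->
  \sum_(i < N) v ^+ i < \sum_(i < N) u ^+ i.
Proof.
move=> hN v0 vu; rewrite -subr_gt0 -sumrB (bigD1 (Ordinal hN)) //= !expr1.
apply: (@lt_le_trans _ _ (u - v)); first by rewrite subr_gt0.
rewrite lerDl; apply: sumr_ge0 => i _; rewrite subr_ge0.
apply: lerXn2r; rewrite ?nnegrE; lra.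
Qed.

Lemma f_minus (R : realType) (p : R) N x :
  fpgf p N x - x = (1 - x) * (1 - p * \sum_(i < N) (p * x + (1 - p)) ^+ i).
Proof.
rewrite /fpgf.
have e := subrX1 (p * x + (1 - p)) N.
have -> : (p * x + (1 - p)) ^+ N = (p * x + (1 - p) - 1) * \sum_(i < N) (p * x + (1 - p)) ^+ i + 1.
  by rewrite -e subrK.
set S := \sum_(i < N) _; ring.
Qed.

Lemma f_below (R : realType) (p : R) N l x : (1 < N)%N -> 0 < p -> p <= 1 ->
  0 <= l -> l < 1 -> fpgf p N l = l -> l < x -> x < 1 -> fpgf p N x < x.
Proof.
move=> hN p0 p1 l0 l1 fl lx x1.
rewrite -subr_lt0 f_minus.
have e0 : 1 - p * \sum_(i < N) (p * l + (1 - p)) ^+ i = 0.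
  have := f_minus p N l; rewrite fl subrr => /esym /eqP.
  rewrite mulf_eq0 => /orP [|/eqP //]; rewrite subr_eq0 => /eqP h.
  by move: l1; rewrite -h ltxx.
rewrite pmulr_rlt0 ?subr_gt0 // -[X in _ < X]e0 ltrD2l ltrN2 ltr_pM2l //.
apply: S_strict => //; first by nra.
by rewrite ltrD2r ltr_pM2l.
Qed.

Local Open Scope classical_set_scope.

Lemma cvg_f (R : realType) (p : R) N (u : nat -> R) l :
  u @ \oo --> l -> (fun n => fpgf p N (u n)) @ \oo --> fpgf p N l.
Proof.
move=> ul; rewrite /fpgf.
have h : (fun n => p * u n + (1 - p)) @ \oo --> p * l + (1 - p).
  by apply: cvgD; [exact: cvgMl_tmp | exact: cvg_cst].
elim: N => [|N IH]; first by rewrite expr0; exact: cvg_cst.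
have -> : (fun n => (p * u n + (1 - p)) ^+ N.+1) =
          (fun n => (p * u n + (1 - p)) * (p * u n + (1 - p)) ^+ N).
  by apply: funext => n; rewrite exprS.
by rewrite exprS; apply: cvgM.
Qed.

Lemma main_cvg (R : realType) (p : R) N x0 : (1 < N)%N -> 0 < p -> p <= 1 ->
  0 <= x0 -> x0 < 1 ->
  (fun n => iter n (fpgf p N) x0) @ \oo --> limn (fun n => iter n (fpgf p N) 0).
Proof.
move=> hN p0 p1 x0ge x01.
set f := fpgf p N.
set a := fun n => iter n f 0.
have p0' : 0 <= p by exact: ltW.
have ar : forall n, 0 <= a n /\ a n <= 1 by move=> n; exact: iter_range.
have ainc : {homo a : n m / (n <= m)%N >-> n <= m}.
  apply/nondecreasing_seqP => n; rewrite /a; elim: n => [|n IH] /=.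
    by case: (@f_range _ p N 0 p0' p1 (lexx 0) ler01).
  by apply: f_mono => //; case: (ar n).
have acv : a @ \oo --> sup (range a).
  apply: nondecreasing_cvgn; first exact: ainc.
  by exists 1 => y [n _ <-]; case: (ar n).
set l := sup (range a).
have la : limn a = l := cvg_lim (@Rhausdorff R) acv.
rewrite la.
have l0 : 0 <= l.
  by have := nondecreasing_cvgn_le ainc (cvgP _ acv) 0; rewrite la.
have l1 : l <= 1.
  rewrite -la; apply: limr_le; first exact: cvgP acv.
  by apply: nearW => n; case: (ar n).
have fl : f l = l.
  have h1 : (fun n => a n.+1) @ \oo --> l by rewrite cvg_shiftS.
  have h2 : (fun n => a n.+1) @ \oo --> f l by exact: cvg_f.
  have e1 := cvg_lim (@Rhausdorff R) h1.
  have e2 := cvg_lim (@Rhausdorff R) h2.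
  by rewrite -e2 e1.
set c := fun n => iter n f x0.
have ac : forall n, a n <= c n.
  by move=> n; apply: iter_mono => //; exact: ltW.
have fixl : forall n, iter n f l = l by elim => //= n ->.
case: (leP x0 l) => [x0l | lx0].
  apply: (squeeze_cvgr _ acv (cvg_cst l)); apply: nearW => n.
  apply/andP; split; first exact: ac.
  by rewrite -(fixl n); apply: iter_mono.
have l1' : l < 1 := lt_trans lx0 x01.
have fle : forall y, l <= y -> y < 1 -> f y <= y.
  move=> y; rewrite le_eqVlt => /orP [/eqP <- _|ly y1]; first by rewrite fl.
  exact: ltW (f_below hN p0 p1 l0 l1' fl ly y1).
have cr : forall n, l <= c n /\ c n <= x0.
  elim => [|n [h1 h2]] /=; first by split; [exact: ltW | exact: lexx].
  split; first by rewrite -fl; apply: f_mono.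
  exact: le_trans (fle _ h1 (le_lt_trans h2 x01)) h2.
have cdec : {homo c : n m / (n <= m)%N >-> m <= n}.
  apply/nonincreasing_seqP => n /=; case: (cr n) => h1 h2.
  exact: fle _ h1 (le_lt_trans h2 x01).
have ccv : c @ \oo --> inf (range c).
  apply: nonincreasing_cvgn; first exact: cdec.
  by exists l => y [n _ <-]; case: (cr n).
set L := inf (range c).
have cL : limn c = L := cvg_lim (@Rhausdorff R) ccv.
have Ll : l <= L.
  rewrite -cL; apply: limr_ge; first exact: cvgP ccv.
  by apply: nearW => n; case: (cr n).
have Lx : L <= x0 by rewrite -cL; exact: (nonincreasing_cvgn_ge cdec (cvgP _ ccv) 0).
have fL : f L = L.
  have h1 : (fun n => c n.+1) @ \oo --> L by rewrite cvg_shiftS.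
  have h2 : (fun n => c n.+1) @ \oo --> f L by exact: cvg_f.
  have e1 := cvg_lim (@Rhausdorff R) h1.
  have e2 := cvg_lim (@Rhausdorff R) h2.
  by rewrite -e2 e1.
have e : L = l.
  apply/eqP; rewrite eq_le Ll andbT leNgt; apply/negP => lL.
  by have := f_below hN p0 p1 l0 l1' fl lL (le_lt_trans Lx x01); rewrite -/f fL ltxx.
by rewrite -e.
Qed.

Unset Implicit Arguments.
Set Strict Implicit.

Theorem lemma4p7 (R : realType) (b d : nat) (p s : R) :
  (2 <= b)%N -> (1 <= d)%N ->
  0 <= p -> p <= 1 -> 1 < p * (b ^ d)%:R ->
  0 < s -> s < 1 ->
  gD b d p s @ \oo --> Pext b d p.
Proof.
move=> hb hd p0 p1 hpN s0 s1.
have hbd : (1 < b ^ d)%N.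
  move: hb hd; clear; case: d => // d hb _.
  by rewrite expnS (leq_trans hb) // leq_pmulr // expn_gt0 (ltnW hb).
pose x0 : Lam b d := [ffun _ => Ordinal (ltnW hb)].
set N := #|Lam b d|.
have hN : (1 < N)%N.
  by rewrite /N card_ffun !card_ord.
have pp : 0 < p.
  rewrite lt_neqAle p0 andbT; apply/eqP => e; move: hpN; rewrite -e mul0r.
  by rewrite ltr10.
rewrite /Pext.
have -> : Pempty b d p = (fun n => iter n (fpgf p N) 0).
  by apply: funext => n; rewrite Pempty_Q Qn_iter.
set qq := p ^+ N * (p ^+ N) ^+ N * (1 - s) ^+ (N * N).
suff H : (fun n => gD b d p s (n + 2)) @ \oo --> limn (fun n => iter n (fpgf p N) 0).
  by rewrite -(cvg_shiftn 2).
have -> : (fun n => gD b d p s (n + 2)) = (fun n => iter n (fpgf p N) (1 - qq)).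
  by apply: funext => n; rewrite addn2 (gD_Q _ _ _ x0) Qn_iter // leqW.
have q0 : 0 < qq by rewrite /qq !mulr_gt0 ?exprn_gt0 ?subr_gt0.
have q1 : qq <= 1.
  have e1 : 0 <= 1 - s by lra.
  have e2 : 1 - s <= 1 by lra.
  have a0 : 0 <= p ^+ N := exprn_ge0 _ p0.
  have a1 : p ^+ N <= 1 := exprn_ile1 _ p0 p1.
  have b0 : 0 <= (p ^+ N) ^+ N := exprn_ge0 _ a0.
  have b1 : (p ^+ N) ^+ N <= 1 := exprn_ile1 _ a0 a1.
  have c0 : 0 <= (1 - s) ^+ (N * N) := exprn_ge0 _ e1.
  have c1 : (1 - s) ^+ (N * N) <= 1 := exprn_ile1 _ e1 e2.
  by rewrite /qq; apply: mulr_ile1 => //; [apply: mulr_ge0 | apply: mulr_ile1].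
apply: main_cvg => //; rewrite ?subr_ge0 //.
by rewrite ltrBlDr ltrDl.
Qed.
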